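(* Let $q\ge2$ and let $f$ be a $q$-regular sequence with a zero-insensitive minimal linear representation $(\mathbf{u},(M_i)_{0\le i<q},\mathbf{v})$, so that $f(n)=\mathbf{u}^t M_{n_0}M_{n_1}\cdots M_{n_L}\mathbf{v}$ where $n_L\cdots n_0$ is the $q$-ary expansion of $n$. Let $r$ be a nonnegative integer. Then the following are equivalent: (i) $f$ is $q$-quasimultiplicative with parameter $r$, i.e. $f(q^{k+r}a+b)=f(a)f(b)$ for all nonnegative integers $a,b,k$ with $0\le b<q^k$; (ii) $M_0^r=\mathbf{v}\mathbf{u}^t$.
   Context: A function $f$ on the nonnegative integers is $q$-regular if $f(n)=\mathbf{u}^t\mathbf{f}(n)$ for a vector $\mathbf{u}$ and a vector-valued function $\mathbf{f}$ for which there are square matrices $M_0,\dots,M_{q-1}$ with $\mathbf{f}(qn+i)=M_i\mathbf{f}(n)$ for all $0\le i<q$ and $qn+i>0$; set $\mathbf{v}=\mathbf{f}(0)$. Equivalently $f(n)=\mathbf{u}^t M_{n_0}M_{n_1}\cdots M_{n_L}\mathbf{v}$ for the $q$-ary expansion $n_L\cdots n_0$ of $n$. The triple $(\mathbf{u},(M_i)_{0\le i<q},\mathbf{v})$ is a linear representation of $f$; it is zero-insensitive if $M_0\mathbf{v}=\mathbf{v}$, and minimal if the dimension of the matrices is minimal among all linear representations of $f$. *)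

(* Defs.v *)
From HB Require Import structures.
From mathcomp Require Import all_boot all_order all_algebra.
Set Implicit Arguments. Unset Strict Implicit. Unset Printing Implicit Defensive.
Import GRing.Theory.
Local Open Scope ring_scope.

(* Little-endian q-ary digits n_0, n_1, ..., n_L of n (empty list for n = 0).
   The fuel n suffices whenever q >= 2. *)
Fixpoint digits_aux (q fuel n : nat) : seq nat :=
  match fuel with
  | 0 => [::]
  | f.+1 => if n == 0%N then [::] else (n %% q)%N :: digits_aux q f (n %/ q)%N
  end.
Definition digits (q n : nat) : seq nat := digits_aux q n n.

Section LinRep.
Variables (K : fieldType) (q d : nat).

Definition digmx (M : 'I_q -> 'M[K]_d) (i : nat) : 'M[K]_d :=
  if insub i is Some j then M j else 0.

Definition digprod (M : 'I_q -> 'M[K]_d) (s : seq nat) : 'M[K]_d :=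
  foldr (fun i A => digmx M i *m A) 1%:M s.

Definition is_linrep (f : nat -> K) (u : 'cV[K]_d) (M : 'I_q -> 'M[K]_d)
    (v : 'cV[K]_d) : Prop :=
  forall n : nat, f n = (u^T *m digprod M (digits q n) *m v) 0 0.

Definition zero_insensitive (M : 'I_q -> 'M[K]_d) (v : 'cV[K]_d) : Prop :=
  digmx M 0 *m v = v.
End LinRep.

Definition minimal_linrep (K : fieldType) (q d : nat) (f : nat -> K)
    (u : 'cV[K]_d) (M : 'I_q -> 'M[K]_d) (v : 'cV[K]_d) : Prop :=
  is_linrep f u M v /\
  forall (d' : nat) (u' : 'cV[K]_d') (M' : 'I_q -> 'M[K]_d') (v' : 'cV[K]_d'),
    is_linrep f u' M' v' -> (d <= d')%N.

Definition quasimult (K : fieldType) (q r : nat) (f : nat -> K) : Prop :=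
  forall a b k : nat, (b < q ^ k)%N -> f (q ^ (k + r) * a + b)%N = f a * f b.

(* Main.v *)
Require Import Defs.
From mathcomp Require Import all_boot all_order all_algebra.
From mathcomp Require Import zify.
From Stdlib Require Import Classical.
Set Implicit Arguments. Unset Strict Implicit. Unset Printing Implicit Defensive.
Import GRing.Theory.
Local Open Scope ring_scope.

Section Gen.
Variables (K : fieldType) (q : nat).

Definition ser d (u : 'cV[K]_d) (M : 'I_q -> 'M[K]_d) (v : 'cV[K]_d)
  (w : seq nat) : 'M[K]_1 := u^T *m digprod M w *m v.

Definition smaller d (u : 'cV[K]_d) (M : 'I_q -> 'M[K]_d) (v : 'cV[K]_d) :=
  exists d' (u' : 'cV[K]_d') (M' : 'I_q -> 'M[K]_d') v',
    (d' < d)%N /\ forall w, ser u' M' v' w = ser u M v w.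

Lemma digprod_nil d (M : 'I_q -> 'M[K]_d) : digprod M [::] = 1%:M.
Proof. by []. Qed.
Lemma digprod_cons d (M : 'I_q -> 'M[K]_d) i s :
  digprod M (i :: s) = digmx M i *m digprod M s.
Proof. by []. Qed.

Lemma digprod_cat d (M : 'I_q -> 'M[K]_d) s t :
  digprod M (s ++ t) = digprod M s *m digprod M t.
Proof.
elim: s => [|i s IH]; first by rewrite cat0s digprod_nil mul1mx.
by rewrite cat_cons !digprod_cons IH mulmxA.
Qed.

Definition trM d (M : 'I_q -> 'M[K]_d) := fun i => (M i)^T.

Lemma digmx_tr d (M : 'I_q -> 'M[K]_d) i : digmx (trM M) i = (digmx M i)^T.
Proof. by rewrite /digmx /trM; case: insub => [j|] //=; rewrite trmx0. Qed.

Lemma digprod_tr d (M : 'I_q -> 'M[K]_d) w :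
  digprod (trM M) w = (digprod M (rev w))^T.
Proof.
elim: w => [|i w IH]; first by rewrite digprod_nil trmx1.
rewrite digprod_cons IH rev_cons -cats1 digprod_cat digprod_cons digprod_nil.
by rewrite mulmx1 trmx_mul digmx_tr.
Qed.

Lemma tr1 (A : 'M[K]_1) : A^T = A.
Proof. by apply/matrixP => i j; rewrite !ord1 mxE. Qed.

Lemma ser_tr d (u : 'cV[K]_d) M v w : ser v (trM M) u w = ser u M v (rev w).
Proof.
rewrite /ser digprod_tr -[RHS]tr1 !trmx_mul trmxK mulmxA //.
Qed.

Lemma smaller_tr d (u : 'cV[K]_d) M v : smaller v (trM M) u -> smaller u M v.
Proof.
case=> d' [u' [M' [v' [lt H]]]]; exists d', v', (trM M'), u'; split => // w.
by rewrite ser_tr H ser_tr revK.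
Qed.

Lemma construct d (u : 'cV[K]_d) M v (W : 'M[K]_d) :
  (u^T <= W)%MS -> (forall j, W *m M j <= W)%MS -> (\rank W < d)%N ->
  smaller u M v.
Proof.
move=> uW hW hr.
set B := row_base W.
have BW : (B <= W)%MS by rewrite eq_row_base.
have WB : (W <= B)%MS by rewrite eq_row_base.
have uB : (u^T <= B)%MS := submx_trans uW WB.
have MB j : (B *m M j <= B)%MS.
  exact: submx_trans (submxMr (M j) BW) (submx_trans (hW j) WB).
pose N j := B *m M j *m pinvmx B.
pose c := u^T *m pinvmx B.
have cB : c *m B = u^T by rewrite mulmxKpV.
have inter : forall w, digprod N w *m B = B *m digprod M w.
  elim => [|i w IH]; first by rewrite !digprod_nil mul1mx mulmx1.
  rewrite !digprod_cons -mulmxA IH mulmxA [RHS]mulmxA; congr (_ *m _).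
  rewrite /digmx; case: insub => [j|]; last by rewrite mul0mx mulmx0.
  by rewrite /N mulmxKpV.
exists (\rank W), c^T, N, (B *m v); split => // w.
rewrite /ser trmxK mulmxA -[c *m _ *m B]mulmxA inter mulmxA cB //.
Qed.

Fixpoint Sp d (g : seq nat -> 'rV[K]_d) (L : seq (seq nat)) : 'M[K]_d :=
  if L is x :: L' then (g x + Sp g L')%MS else 0.

Lemma exL d (g : seq nat -> 'rV[K]_d) : exists L, forall x, (g x <= Sp g L)%MS.
Proof.
suff H : forall m L, (d - \rank (Sp g L) <= m)%N ->
    exists L', forall x, (g x <= Sp g L')%MS.
  by apply: (H d [::]); rewrite leq_subr.
elim => [|m IH] L hL.
  exists L => x; apply: submx_full.
  by rewrite /row_full eqn_leq rank_leq_col /= -subn_eq0 -leqn0.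
case: (classic (forall x, (g x <= Sp g L)%MS)) => [H|H]; first by exists L.
have [x hx] := not_all_ex_not _ _ H.
apply: (IH (x :: L)).
have lt : (\rank (Sp g L) < \rank (Sp g (x :: L)))%N.
  apply: rank_ltmx; rewrite ltmxE /= addsmxSr /=; apply/negP => sub.
  by apply: hx; exact: submx_trans (addsmxSl _ _) sub.
have := rank_leq_col (Sp g (x :: L)).
move: lt hL; lia.
Qed.

Lemma obs d (u : 'cV[K]_d) (M : 'I_q -> 'M[K]_d) v p (w : 'M[K]_(d, p)) :
  ~ smaller u M v -> (forall x, u^T *m digprod M x *m w = 0) -> w = 0.
Proof.
move=> nsm hw.
pose g := fun x => u^T *m digprod M x.
have [L hL] := exL g.
have inv : forall L' j, (Sp g L' *m M j <= Sp g L)%MS.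
  elim => [|x L' IH] j /=; first by rewrite mul0mx sub0mx.
  rewrite (eqmxMr _ (addsmxE _ _)) mul_col_mx col_mx_sub IH andbT.
  have -> : g x *m M j = g (x ++ [:: nat_of_ord j]).
    by rewrite /g digprod_cat digprod_cons digprod_nil mulmx1 /digmx valK mulmxA.
  exact: hL.
case: (ltnP (\rank (Sp g L)) d) => hr.
  exfalso; apply: nsm; apply: (@construct _ _ _ _ (Sp g L)) => //.
  by have := hL [::]; rewrite /g digprod_nil mulmx1.
have full : row_full (Sp g L) by rewrite /row_full eqn_leq rank_leq_col hr.
have ker : forall L', (Sp g L' <= kermx w)%MS.
  elim => [|x L' IH] /=; first by rewrite sub0mx.
  by rewrite addsmx_sub IH andbT sub_kermx /g hw eqxx.
have : (1%:M <= kermx w)%MS := submx_trans (submx_full _ full) (ker L).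
by rewrite sub_kermx mul1mx => /eqP.
Qed.

Lemma D_zero d (u : 'cV[K]_d) (M : 'I_q -> 'M[K]_d) v (D : 'M[K]_d) :
  ~ smaller u M v ->
  (forall x y, u^T *m digprod M x *m D *m digprod M y *m v = 0) -> D = 0.
Proof.
move=> nsm H.
have H1 : forall y, D *m digprod M y *m v = 0.
  move=> y; apply: (obs nsm) => x; by rewrite !mulmxA H.
have nsm' : ~ smaller v (trM M) u by move/smaller_tr.
rewrite -(trmxK D); suff -> : D^T = 0 by rewrite trmx0.
apply: (obs nsm') => x.
by rewrite digprod_tr -mulmxA -trmx_mul -trmx_mul H1 trmx0.
Qed.

Hypothesis hq : (2 <= q)%N.

Lemma daux f1 f2 n : (n <= f1)%N -> (n <= f2)%N ->
  digits_aux q f1 n = digits_aux q f2 n.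
Proof.
have d0 : forall f, digits_aux q f 0 = [::] by case.
elim: f1 f2 n => [|f1 IH] f2 [|n] h1 h2; rewrite ?d0 //.
case: f2 h2 => // f2 h2 /=.
have lt : (n.+1 %/ q < n.+1)%N by rewrite ltn_Pdiv.
by congr (_ :: _); apply: IH; rewrite -ltnS (leq_trans lt).
Qed.

Lemma digitsS n : (0 < n)%N -> digits q n = (n %% q)%N :: digits q (n %/ q).
Proof.
case: n => // n _; rewrite /digits /=; congr (_ :: _); apply: daux => //.
by have := ltn_Pdiv hq (ltn0Sn n); rewrite ltnS.
Qed.

Definition wval (w : seq nat) : nat := foldr (fun i acc => i + q * acc)%N 0%N w.

Lemma moddiv i a : (i < q)%N -> ((i + q * a) %% q = i)%N /\ ((i + q * a) %/ q = a)%N.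
Proof.
have q0 : (0 < q)%N by apply: ltnW.
move=> hi; rewrite addnC mulnC modnMDl modn_small // divnMDl // divn_small //.
by rewrite addn0.
Qed.

Lemma exprSmx d (A : 'M[K]_d) n : A ^+ n.+1 = A *m A ^+ n.
Proof. exact: exprS. Qed.

Lemma digprod_val d (M : 'I_q -> 'M[K]_d) w : all (fun i => i < q)%N w ->
  exists e, digprod M w = digprod M (digits q (wval w)) *m (digmx M 0 ^+ e).
Proof.
elim: w => [|i w IH].
  by exists 0%N; rewrite expr0 mulmx1.
rewrite [all _ _]/= [wval _]/= => /andP [hi hw]; have [e He] := IH hw; rewrite digprod_cons He.
case: (posnP (i + q * wval w)%N) => h.
  have [i0 w0] : i = 0%N /\ wval w = 0%N.
    move: h => /eqP; rewrite addn_eq0 muln_eq0 => /andP [/eqP -> /orP [/eqP q0|/eqP ->]] //.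
    by move: hq; rewrite q0.
  rewrite h w0 i0; exists e.+1; rewrite !digprod_nil !mul1mx exprSmx //.
exists e; rewrite (digitsS h); have [-> ->] := moddiv (wval w) hi.
by rewrite digprod_cons mulmxA.
Qed.

Lemma ser_val d (u : 'cV[K]_d) (M : 'I_q -> 'M[K]_d) (v : 'cV[K]_d) w : digmx M 0 *m v = v ->
  all (fun i => i < q)%N w ->
  u^T *m digprod M w *m v = u^T *m digprod M (digits q (wval w)) *m v.
Proof.
move=> hzi hw; have [e ->] := digprod_val M hw.
rewrite -!mulmxA; congr (_ *m (_ *m _)).
elim: e => [|e IH]; first by rewrite expr0 mul1mx.
by rewrite exprSmx -mulmxA IH hzi.
Qed.

Lemma wval_cat s t : wval (s ++ t) = (wval s + q ^ size s * wval t)%N.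
Proof.
elim: s => [|i s IH] /=; first by rewrite expn0 mul1n.
by rewrite IH expnS mulnDr mulnA addnA.
Qed.

Lemma wval_nseq r : wval (nseq r 0%N) = 0%N.
Proof. by elim: r => //= r ->; rewrite muln0. Qed.

Lemma wval_lt w : all (fun i => i < q)%N w -> (wval w < q ^ size w)%N.
Proof.
elim: w => [|i w IH] //= /andP [hi hw].
have := IH hw; rewrite expnS; nia.
Qed.

Lemma digprod_nseq d (M : 'I_q -> 'M[K]_d) r :
  digprod M (nseq r 0%N) = digmx M 0 ^+ r.
Proof.
elim: r => [|r IH]; first by rewrite expr0.
by rewrite -[nseq r.+1 0%N]/(0%N :: nseq r 0%N) digprod_cons IH exprSmx.
Qed.

Lemma digprod_bad d (M : 'I_q -> 'M[K]_d) w :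
  ~~ all (fun i => i < q)%N w -> digprod M w = 0.
Proof.
elim: w => // i w IH; rewrite [all _ _]/= negb_and => /orP [hi|hw]; rewrite digprod_cons.
  by rewrite /digmx insubF ?mul0mx //; apply: negbTE.
by rewrite IH ?mulmx0.
Qed.

Fixpoint word_of (k b : nat) : seq nat :=
  if k is k'.+1 then (b %% q)%N :: word_of k' (b %/ q) else [::].

Lemma size_word_of k b : size (word_of k b) = k.
Proof. by elim: k b => //= k IH b; rewrite IH. Qed.

Lemma all_word_of k b : all (fun i => i < q)%N (word_of k b).
Proof. by elim: k b => //= k IH b; rewrite IH ltn_pmod // ltnW. Qed.

Lemma wval_word_of k b : (b < q ^ k)%N -> wval (word_of k b) = b.
Proof.
elim: k b => [|k IH] b /=; first by rewrite expn0 ltnS leqn0 => /eqP ->.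
move=> hb; rewrite IH; last by rewrite ltn_divLR ?(ltnW hq) // -expnSr.
by rewrite [in RHS](divn_eq b q) addnC mulnC.
Qed.

End Gen.

Lemma scal (K : fieldType) (A B : 'M[K]_1) i j : (A *m B) i j = A i j * B i j.
Proof. by rewrite mxE big_ord1 !ord1. Qed.

Theorem theorem8 (K : fieldType) (q : nat) (hq : (2 <= q)%N) (f : nat -> K)
    (d : nat) (u : 'cV[K]_d) (M : 'I_q -> 'M[K]_d) (v : 'cV[K]_d)
    (hmin : minimal_linrep f u M v) (hzi : zero_insensitive M v) (r : nat) :
  quasimult q r f <-> digmx M 0 ^+ r = v *m u^T.
Proof.
have nsm : ~ smaller u M v.
  case=> d' [u' [M' [v' [lt H]]]].
  have : is_linrep f u' M' v'.
    move=> n; rewrite (proj1 hmin n); have := H (digits q n); rewrite /ser => ->//.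
  by move/(proj2 hmin); rewrite leqNgt lt.
have hf : forall w, all (fun i => i < q)%N w ->
    f (wval q w) = (u^T *m digprod M w *m v) 0 0.
  by move=> w hw; rewrite (proj1 hmin) (@ser_val _ _ hq _ u M v w hzi hw).
have key : forall x y, all (fun i => i < q)%N x -> all (fun i => i < q)%N y ->
    f (q ^ (size x + r) * wval q y + wval q x)%N =
    (u^T *m digprod M x *m digmx M 0 ^+ r *m digprod M y *m v) 0 0.
  move=> x y hx hy.
  have E : wval q (x ++ nseq r 0%N ++ y) = (q ^ (size x + r) * wval q y + wval q x)%N.
    by rewrite !wval_cat wval_nseq size_nseq add0n expnD mulnA addnC.
  rewrite -E hf; last by rewrite !all_cat all_nseq /= (ltnW hq) orbT hx hy.
  by rewrite !digprod_cat digprod_nseq !mulmxA.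
split.
- move=> Hq; apply/eqP; rewrite -subr_eq0; apply/eqP.
  apply: (D_zero nsm) => x y.
  case: (boolP (all (fun i => i < q)%N x)) => hx; last first.
    by rewrite (digprod_bad _ hx) mulmx0 !mul0mx.
  case: (boolP (all (fun i => i < q)%N y)) => hy; last first.
    by rewrite (digprod_bad _ hy) mulmx0 mul0mx.
  rewrite mulmxBr !mulmxBl; apply/eqP; rewrite subr_eq0; apply/eqP.
  apply/matrixP => i j; rewrite !ord1.
  rewrite -key // (Hq _ _ _ (wval_lt hq hx)) !hf // mulrC -scal !mulmxA //.
- move=> H a b k hb.
  have hy : (a < q ^ a)%N by rewrite ltn_expl.
  have := key (word_of q k b) (word_of q a a) (all_word_of hq _ _) (all_word_of hq _ _).
  rewrite size_word_of !wval_word_of // => ->.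
  have fa : f a = (u^T *m digprod M (word_of q a a) *m v) 0 0.
    by rewrite -{1}(wval_word_of hq hy) hf ?all_word_of.
  have fb : f b = (u^T *m digprod M (word_of q k b) *m v) 0 0.
    by rewrite -{1}(wval_word_of hq hb) hf ?all_word_of.
  by rewrite fa fb H mulrC -scal !mulmxA.
Qed.
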